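(* Let $X$ be a Tychonoff space and $x \in X$. If player II has a winning strategy in the game $\mathsf{G}_1(\Omega_x, \Omega_x)$, then $X$ is productively countably tight at $x$.
   Context: For a point $x$ of a space $X$, $\Omega_x$ denotes the collection of all sets $A \subset X$ such that $x \notin A$ and $x \in \overline{A}$. The game $\mathsf{G}_1(\Omega_x,\Omega_x)$ is played in innings $n \in \omega$: in inning $n$ player I chooses $A_n \in \Omega_x$ and then player II chooses $a_n \in A_n$; player II wins if $\{a_n : n \in \omega\} \in \Omega_x$. A space $Y$ has countable tightness at $y \in Y$ if whenever $y \in \overline{A}$ there is a countable $B \subset A$ with $y \in \overline{B}$. $X$ is productively countably tight at $x$ if for every space $Y$ and every $y \in Y$ such that $Y$ has countable tightness at $y$, the product $X \times Y$ has countable tightness at $\langle x, y\rangle$. *)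

(* Defs.v *)
From HB Require Import structures.
From mathcomp Require Import all_boot all_order all_algebra.
From mathcomp Require Import all_classical all_reals all_analysis.
From mathcomp Require Import Rstruct Rstruct_topology.
Set Implicit Arguments. Unset Strict Implicit. Unset Printing Implicit Defensive.
Import Order.TTheory GRing.Theory Num.Theory.
Local Open Scope classical_set_scope.
Local Open Scope ring_scope.

Definition tychonoff_space (X : topologicalType) : Prop :=
  accessible_space X /\
  forall (x : X) (B : set X), closed B -> ~ B x ->
    exists f : X -> Rdefinitions.R,
      continuous f /\ f x = 0 /\ (forall b, B b -> f b = 1) /\
      (forall z, 0 <= f z <= 1).

Definition Omega {X : topologicalType} (x : X) : set (set X) :=
  [set A | ~ A x /\ closure A x].

Definition countably_tight_at {Y : topologicalType} (y : Y) : Prop :=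
  forall A : set Y, closure A y ->
    exists B : set Y, B `<=` A /\ countable B /\ closure B y.

Definition productively_countably_tight_at {X : topologicalType} (x : X) : Prop :=
  forall (Y : topologicalType) (y : Y), countably_tight_at y ->
    countably_tight_at ((x, y) : X * Y).

(* A strategy for player II in G_1(Omega_x, Omega_x): given the moves
   [:: A_0; ...; A_n] of player I so far, it chooses II's move in inning n. *)
Definition strategy_II (X : topologicalType) := seq (set X) -> X.

Definition legal_strategy_II {X : topologicalType} (x : X) (s : strategy_II X) :=
  forall (h : seq (set X)) (A : set X),
    (forall B, B \in h -> Omega x B) -> Omega x A -> A (s (rcons h A)).

Definition play_II {X : topologicalType} (s : strategy_II X) (A : nat -> set X) (n : nat) : X :=
  s (mkseq A n.+1).

Definition winning_strategy_II {X : topologicalType} (x : X) (s : strategy_II X) :=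
  legal_strategy_II x s /\
  forall A : nat -> set X, (forall n, Omega x (A n)) ->
    Omega x (range (play_II s A)).

Definition II_has_winning_strategy {X : topologicalType} (x : X) : Prop :=
  exists s : strategy_II X, winning_strategy_II x s.

(* Main.v *)
Require Import Defs.
From mathcomp Require Import all_boot all_classical all_reals all_analysis.
Local Open Scope classical_set_scope.

Lemma nbhs_pairP {X Y : topologicalType} {x : X} {y : Y} {N : set (X * Y)} :
  nbhs (x, y) N -> exists U V, nbhs x U /\ nbhs y V /\ U `*` V `<=` N.
Proof. by move=> [[U V] [/= nU nV] sN]; exists U, V. Qed.

Lemma nbhs_pairX {X Y : topologicalType} {x : X} {y : Y} {U V} :
  nbhs x U -> nbhs y V -> nbhs (x, y) (U `*` V).
Proof. by move=> nU nV; exists (U, V). Qed.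

Lemma enum_countable (Y : topologicalType) (B : set Y) (b0 : Y) :
  B b0 -> countable B -> exists G : nat -> Y, range G = B.
Proof.
move=> Bb0 /countable_injP [f finj].
exists (fun n => xget b0 [set b | B b /\ f b = n]).
apply/seteqP; split.
- move=> _ [n _ <-].
  case: (pselect (exists b, B b /\ f b = n)) => [ex|nex].
  + by have [] := xgetPex b0 ex.
  + by rewrite xgetPN //; move=> b [Bb fb]; apply: nex; exists b.
- move=> b Bb; exists (f b) => //.
  have [Bb' fb'] := xgetI b0 (conj Bb erefl : [set c | B c /\ f c = f b] b).
  by apply: finj; rewrite ?inE.
Qed.

Lemma legal_rcons (X : topologicalType) (x : X) (h : seq (set X)) A :
  (forall B, B \in h -> Omega x B) -> Omega x A ->
  forall B, B \in rcons h A -> Omega x B.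
Proof.
move=> hh hA B; rewrite mem_rcons in_cons => /orP [/eqP -> //|]; exact: hh.
Qed.

Lemma step (X Y : topologicalType) (x : X) (y : Y) (s : strategy_II X)
  (W : set (X * Y)) :
  legal_strategy_II x s -> countably_tight_at y ->
  (forall V, nbhs y V ->
     closure [set a | a <> x /\ exists y', V y' /\ W (a, y')] x) ->
  forall h, (forall B, B \in h -> Omega x B) ->
  exists FG : (nat -> set X) * (nat -> Y),
    (forall k, Omega x (FG.1 k)) /\ (forall k, W (s (rcons h (FG.1 k)), FG.2 k))
    /\ closure (range FG.2) y.
Proof.
move=> hs ty HA h hh.
pose P := [set y' | exists A, Omega x A /\ W (s (rcons h A), y')].
have clP : closure P y.
  move=> V nV.
  pose AV := [set a | a <> x /\ exists y', V y' /\ W (a, y')].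
  have OAV : Omega x AV by split; [by move=> [] | exact: HA].
  have [_ [y' [Vy' Wy']]] := hs h AV hh OAV.
  by exists y'; split => //; exists AV.
have [B [BP [cB clB]]] := ty P clP.
have [b0 [Bb0 _]] := clB setT filterT.
have [G RG] := @enum_countable Y B b0 Bb0 cB.
have : forall k, exists A, Omega x A /\ W (s (rcons h A), G k).
  by move=> k; apply: BP; rewrite -RG; exists k.
move=> /choice [F HF].
exists (F, G) => /=; split; first by move=> k; have [] := HF k.
by split; [move=> k; have [] := HF k | rewrite RG].
Qed.

Theorem corollary2p4 (X : topologicalType) (x : X) :
  tychonoff_space X -> II_has_winning_strategy x ->
  productively_countably_tight_at x.
Proof.
move=> _ [s [hleg hwin]] Y y ty W clW.
pose AV V := [set a | a <> x /\ exists y', V y' /\ W (a, y')].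
case: (pselect (forall V, nbhs y V -> closure (AV V) x)) => [Hall|Hno]; last first.
  move/existsNP: Hno => [V0 /not_implyP [nV0 ncl]].
  move/existsNP: ncl => [U0 /not_implyP [nU0 hU0]].
  pose Wx := [set y' | W (x, y')].
  have clWx : closure Wx y.
    move=> V nV.
    have nUV : nbhs (x, y) (U0 `*` (V `&` V0)) by apply: nbhs_pairX => //; apply: filterI.
    have [[a y'] [Wp [/= Ua [Vy' V0y']]]] := clW _ nUV.
    case: (pselect (a = x)) => [ax|anx].
      by subst a; exists y'.
    by exfalso; apply: hU0; exists a; split => //; split => //; exists y'.
  have [B [BW [cB clB]]] := ty Wx clWx.
  exists ((fun b => (x, b)) @` B); split; first by move=> _ [b Bb <-]; exact: BW.
  split; first exact: sub_countable (card_image_le _ _) cB.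
  move=> N nN; have [U [V [nU [nV UVN]]]] := nbhs_pairP nN.
  have [b [Bb Vb]] := clB V nV.
  exists (x, b); split; first by exists b.
  by apply: UVN; split => //=; exact: nbhs_singleton.
pose legal (h : seq (set X)) := forall B, B \in h -> Omega x B.
have : forall h, exists FG : (nat -> set X) * (nat -> Y), legal h ->
    (forall k, Omega x (FG.1 k)) /\ (forall k, W (s (rcons h (FG.1 k)), FG.2 k))
    /\ closure (range FG.2) y.
  move=> h; case: (pselect (legal h)) => [lh|nlh]; last first.
    by exists (fun _ => set0, fun _ => y).
  have [FG HFG] := @step X Y x y s W hleg ty Hall h lh.
  by exists FG.
move=> /choice [FG HFG].
pose F h := (FG h).1; pose G h := (FG h).2.
pose hist (q : seq nat) := foldl (fun h k => rcons h (F h k)) [::] q.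
have histS q k : hist (rcons q k) = rcons (hist q) (F (hist q) k).
  by rewrite /hist foldl_rcons.
have lhist q : legal (hist q).
  elim/last_ind: q => [|q k IH]; first by move=> B.
  rewrite histS; apply: legal_rcons => //.
  exact: (proj1 (HFG _ IH)).
pose f (q : seq nat * nat) := (s (rcons (hist q.1) (F (hist q.1) q.2)), G (hist q.1) q.2).
exists (f @` setT); split.
  move=> _ [q _ <-]; exact: (proj1 (proj2 (HFG _ (lhist q.1)))).
split; first exact: sub_countable (card_image_le _ _) (countableP _).
move=> N nN; apply: contrapT => hN.
have [U [V [nU [nV UVN]]]] := nbhs_pairP nN.
have : forall h, exists k, legal h -> V (G h k).
  move=> h; case: (pselect (legal h)) => [lh|nlh]; last by exists 0%N.
  have [_ [_ clG]] := HFG _ lh.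
  have [_ [[k _ <-] Vk]] := clG V nV.
  by exists k.
move=> /choice [K HK].
pose bs := fix bs n := if n is n'.+1 then rcons (bs n') (K (hist (bs n'))) else [::].
pose A n := F (hist (bs n)) (K (hist (bs n))).
have mkA n : mkseq A n = hist (bs n).
  elim: n => [//|n IH]; by rewrite mkseqS IH /= histS.
have OA n : Omega x (A n) by exact: (proj1 (HFG _ (lhist (bs n)))).
have [_ clR] := hwin A OA.
have [_ [[n _ <-] Ua]] := clR U nU.
apply: hN; exists (f (bs n, K (hist (bs n)))); split; first by exists (bs n, K (hist (bs n))).
apply: UVN; split => /=.
  by move: Ua; rewrite /play_II mkseqS mkA.
exact: HK.
Qed.
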